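(* Let $-1<\gamma<1$, $d>0$, $k>0$, $\alpha\in\mathbb{R}$, $\delta\in[0,2\pi)$, and let $$I(\phi)=\frac{1}{1+e^{k\left(\cos(\delta/2)-\cos(\phi-\alpha-\delta/2)\right)}}.$$ Consider the system $$\dot\phi_1=\gamma-\sin\phi_1+d\,I(\phi_2),\qquad \dot\phi_2=\gamma-\sin\phi_2+d\,I(\phi_1)$$ on the torus $(\mathbb{R}/2\pi\mathbb{Z})^2$. Then every equilibrium $(\phi_1,\phi_2)$ satisfies $\arcsin\gamma<\phi_{1,2}<\pi-\arcsin\gamma$, where each $\phi_i$ is taken modulo $2\pi$ as a point of the arc $(\arcsin\gamma,\ \arcsin\gamma+2\pi)$.
   Context: $\arcsin$ denotes the principal branch with values in $[-\pi/2,\pi/2]$. *)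

(* Defs.v *)
From Stdlib Require Export Reals.
Open Scope R_scope.

Definition I_fun (k alpha delta phi : R) : R :=
  1 / (1 + exp (k * (cos (delta / 2) - cos (phi - alpha - delta / 2)))).

Definition rhs1 (gamma d k alpha delta phi1 phi2 : R) : R :=
  gamma - sin phi1 + d * I_fun k alpha delta phi2.
Definition rhs2 (gamma d k alpha delta phi1 phi2 : R) : R :=
  gamma - sin phi2 + d * I_fun k alpha delta phi1.

Definition arc_rep (g phi psi : R) : Prop :=
  asin g < psi < asin g + 2 * PI /\ exists m : Z, psi = phi + 2 * PI * IZR m.

(* Main.v *)
Require Import Defs.
From Stdlib Require Import Reals Lra.
Open Scope R_scope.

Lemma sinZ (x : R) (m : Z) : sin (x + 2 * PI * IZR m) = sin x.
Proof.
  destruct m as [|p|p]; simpl.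
  - f_equal; ring.
  - assert (IZR (Z.pos p) = INR (Pos.to_nat p)) as ->
      by (rewrite INR_IZR_INZ, Znat.positive_nat_Z; reflexivity).
    replace (x + 2 * PI * INR (Pos.to_nat p)) with (x + 2 * INR (Pos.to_nat p) * PI) by ring.
    apply sin_period.
  - rewrite <- (sin_period (x + 2 * PI * IZR (Z.neg p)) (Pos.to_nat p)).
    f_equal. rewrite INR_IZR_INZ, Znat.positive_nat_Z, <- BinInt.Pos2Z.opp_pos, opp_IZR. ring.
Qed.

Lemma key (a psi : R) : - (PI/2) <= a <= PI/2 -> a < psi < a + 2 * PI ->
  sin a < sin psi -> psi < PI - a.
Proof.
  intros ha hp hs.
  destruct (Rlt_or_le psi (PI - a)) as [h|h]; [exact h|exfalso].
  set (u := (psi + a)/2). set (v := (psi - a)/2).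
  assert (E1 : psi = u + v) by (unfold u, v; field).
  assert (E2 : a = u - v) by (unfold u, v; field).
  assert (Hc : cos u <= 0) by (apply cos_le_0; unfold u; lra).
  assert (Hv : 0 < sin v) by (apply sin_gt_0; unfold v; lra).
  rewrite E1, E2, sin_plus, sin_minus in hs.
  nra.
Qed.

Theorem mainTheorem5 (gamma d k alpha delta : R)
  (hg : -1 < gamma < 1) (hd : 0 < d) (hk : 0 < k)
  (hdelta : 0 <= delta < 2 * PI)
  (phi1 phi2 : R)
  (heq1 : rhs1 gamma d k alpha delta phi1 phi2 = 0)
  (heq2 : rhs2 gamma d k alpha delta phi1 phi2 = 0) :
  forall psi1 psi2 : R,
    arc_rep gamma phi1 psi1 -> arc_rep gamma phi2 psi2 ->
    (asin gamma < psi1 < PI - asin gamma) /\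
    (asin gamma < psi2 < PI - asin gamma).
Proof.
  assert (HI : forall x, 0 < I_fun k alpha delta x).
  { intro x; unfold I_fun. apply Rdiv_lt_0_compat; [lra|].
    pose proof (exp_pos (k * (cos (delta / 2) - cos (x - alpha - delta / 2)))); lra. }
  assert (Hs : sin (asin gamma) = gamma) by (apply sin_asin; lra).
  pose proof (asin_bound gamma) as Hb.
  unfold rhs1, rhs2 in *.
  intros psi1 psi2 [h1 [m1 e1]] [h2 [m2 e2]].
  pose proof (HI phi1); pose proof (HI phi2).
  split; split; try lra; apply key; auto; subst; rewrite sinZ, Hs; nra.
Qed.
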